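(* Let $(S,\Delta,\mathbb{P})$ be a probability space, $(U,d)$ a separable metric space, $\mathfrak{X}$ the set of $U$-valued random variables on $S$, $r\geq0$, $\mathcal{I}$ an ideal on $\mathbb{N}$, and $\underline{X}=\{X_n\}$ a sequence in $\mathfrak{X}$. Suppose that to each $Y\in\Gamma^{r^w}_{\underline{X}}(\mathcal{I}^{\mathbb{P}})$ a weak cluster constant $\delta_*(Y)$ is associated and that $\inf\{\delta_*(Y):Y\in\Gamma^{r^w}_{\underline{X}}(\mathcal{I}^{\mathbb{P}})\}>0$. Then $\Gamma^{r^w}_{\underline{X}}(\mathcal{I}^{\mathbb{P}})$ is closed in $(\mathfrak{X}^0,\rho)$.
   Context: The Ky Fan metric is $\rho(X,Y)=\inf\{\varepsilon>0:\mathbb{P}(d(X,Y)>\varepsilon)\leq\varepsilon\}$; $\mathfrak{X}^0$ is the set of equivalence classes of $\mathfrak{X}$ under almost sure equality, on which $\rho$ is a metric. An ideal on $\mathbb{N}$ is a family $\mathcal{I}\subseteq\mathcal{P}(\mathbb{N})$ with $\varnothing\in\mathcal{I}$, closed under finite unions and under subsets. $\Gamma^{r^w}_{\underline{X}}(\mathcal{I}^{\mathbb{P}})$ is the set of $Y\in\mathfrak{X}$ for which there is $\delta_*=\delta_*(Y)>0$ with $\{n:\mathbb{P}(d(X_n,Y)<r+\varepsilon)>\delta_*\}\notin\mathcal{I}$ for every $\varepsilon>0$; such a $\delta_*(Y)$ is called a weak cluster constant of $Y$ (with respect to $\underline{X}$). *)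

(* Defs.v *)
From HB Require Import structures.
From mathcomp Require Import all_boot all_order all_algebra.
From mathcomp Require Import all_classical all_reals all_analysis.
Set Implicit Arguments. Unset Strict Implicit. Unset Printing Implicit Defensive.
Import Order.TTheory GRing.Theory Num.Theory.
Local Open Scope classical_set_scope.
Local Open Scope ring_scope.

Section Defs.
Context (R : realType) (U : Type) (dist : U -> U -> R).

Definition is_metric : Prop :=
  (forall x y, 0 <= dist x y) /\
  (forall x y, dist x y = 0 <-> x = y) /\
  (forall x y, dist x y = dist y x) /\
  (forall x y z, dist x z <= dist x y + dist y z).

Definition separable_metric : Prop :=
  exists D : set U, countable D /\
    forall x e, 0 < e -> exists2 y, D y & dist x y < e.

Definition metric_open (A : set U) : Prop :=
  forall x, A x -> exists2 e, 0 < e & forall y, dist x y < e -> A y.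

Definition metric_borel : set (set U) := <<s metric_open >>.

Definition is_rv (d : measure_display) (S : measurableType d) (X : S -> U) : Prop :=
  forall A, metric_borel A -> measurable (X @^-1` A).

Definition is_ideal (I : set (set nat)) : Prop :=
  I set0 /\ (forall A B, I A -> I B -> I (A `|` B)) /\
  (forall A B, B `<=` A -> I A -> I B).

Context (d : measure_display) (S : measurableType d) (P : probability S R).

Definition weak_cluster_const (X : nat -> S -> U) (r : R) (I : set (set nat))
    (Y : S -> U) (delta : R) : Prop :=
  0 < delta /\
  forall e, 0 < e ->
    ~ I [set n | (delta%:E < P [set s | (dist (X n s) (Y s) < r + e)%R])%E].

Definition Gamma_rw (X : nat -> S -> U) (r : R) (I : set (set nat)) : set (S -> U) :=
  [set Y | is_rv Y /\ exists delta, weak_cluster_const X r I Y delta].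

Definition kyfan (Y Z : S -> U) : R :=
  inf [set e : R | 0 < e /\ (P [set s | (e < dist (Y s) (Z s))%R] <= e%:E)%E].

End Defs.

(* Main.v *)
Require Import Defs.
From mathcomp Require Import lra.
From HB Require Import structures.
From mathcomp Require Import all_boot all_order all_algebra.
From mathcomp Require Import all_classical all_reals all_analysis.
Import Order.TTheory GRing.Theory Num.Theory.
Local Open Scope classical_set_scope.
Local Open Scope ring_scope.
Section H.
Variables (d : measure_display) (S : measurableType d) (R : realType) (U : Type) (dist : U -> U -> R).
Hypothesis hm : is_metric dist.

Lemma ball_borel x a : metric_borel dist [set y | dist y x < a].
Proof.
apply: sub_sigma_algebra => y /= hy; exists (a - dist y x); first by rewrite subr_gt0.
move=> z hz; case: hm => _ [_ [hs ht]].
have := ht z y x; rewrite (hs z y); lra.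
Qed.

Hypothesis hsep : separable_metric dist.

Lemma meas_lt (V W : S -> U) t : is_rv dist V -> is_rv dist W ->
  measurable [set s | dist (V s) (W s) < t].
Proof.
move=> hV hW; case: hsep => D [/countable_injP [f finj] dense].
case: hm => h0 [_ [hs ht]].
pose G (q : rat) (n : nat) := [set s | exists2 x, (D x /\ f x = n) &
   (dist (V s) x < ratr q /\ dist (W s) x < t - ratr q)].
have -> : [set s | dist (V s) (W s) < t] = \bigcup_q \bigcup_n G q n.
  apply/seteqP; split => s /=.
  - move=> hst.
    have g0 : 0 < (t - dist (V s) (W s)) / 4 by apply: divr_gt0; rewrite ?subr_gt0.
    have [y Dy hy] := dense (V s) _ g0.
    have := ht (W s) (V s) y; rewrite (hs (W s) (V s)) => hWy.
    have : dist (V s) y < t - dist (W s) y by lra.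
    move=> /rat_in_itvoo [q]; rewrite in_itv /= => /andP [q1 q2].
    exists q => //; exists (f y) => //; exists y => //; split => //; lra.
  - move=> [q _ [n _ [x _ [h1 h2]]]].
    have := ht (V s) x (W s); rewrite (hs x (W s)); lra.
apply: bigcupT_measurable_rat => q; apply: bigcupT_measurable => n.
have [[x [Dx fx]]|nx] := pselect (exists x, D x /\ f x = n).
- have -> : G q n = V @^-1` [set y | dist y x < ratr q] `&` W @^-1` [set y | dist y x < t - ratr q].
    apply/seteqP; split => s /=.
    + move=> [y [Dy fy] [h1 h2]].
      have yx : y = x by apply: finj; rewrite ?inE // fy fx.
      by rewrite -yx.
    + by move=> [h1 h2]; exists x.
  by apply: measurableI; [apply: hV | apply: hW]; apply: ball_borel.
- have -> : G q n = set0.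
    apply/seteqP; split => s //= [y [Dy fy] _]; apply: nx; by exists y.
  exact: measurable0.
Qed.

Lemma meas_gt (V W : S -> U) t : is_rv dist V -> is_rv dist W ->
  measurable [set s | t < dist (V s) (W s)].
Proof.
move=> hV hW.
have -> : [set s | t < dist (V s) (W s)] =
  \bigcup_n ~` [set s | dist (V s) (W s) < t + n.+1%:R^-1].
  apply/seteqP; split => s /=.
  - by move=> /ltr_add_invr [k hk]; exists k => //=; apply/negP; rewrite -leNgt ltW.
  - move=> [k _] /= /negP; rewrite -leNgt => h; apply: (lt_le_trans _ h).
    by rewrite ltrDl invr_gt0.
apply: bigcupT_measurable => n; apply: measurableC; exact: meas_lt.
Qed.
End H.

Theorem proposition3p13 (d : measure_display) (S : measurableType d)
  (R : realType) (P : probability S R) (U : Type) (dist : U -> U -> R)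
  (r : R) (I : set (set nat)) (X : nat -> S -> U)
  (deltastar : (S -> U) -> R) :
  is_metric dist -> separable_metric dist -> 0 <= r -> is_ideal I ->
  (forall n, is_rv dist (X n)) ->
  (forall Y, Gamma_rw dist P X r I Y ->
     weak_cluster_const dist P X r I Y (deltastar Y)) ->
  (exists2 c : R, 0 < c &
     forall Y, Gamma_rw dist P X r I Y -> c <= deltastar Y) ->
  (* Gamma is closed in (X^0, rho): it contains every random variable in its
     Ky Fan closure *)
  forall Y : S -> U, is_rv dist Y ->
    (forall eta : R, 0 < eta ->
       exists2 Z, Gamma_rw dist P X r I Z & kyfan dist P Z Y < eta) ->
    Gamma_rw dist P X r I Y.
Proof.
move=> hm hsep r0 hI hX hcl [c c0 hc] Y hY hclos.
split => //; exists (c / 2); split; first by apply: divr_gt0.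
move=> e e0 HI.
have eta0 : 0 < Num.min (e / 2) (c / 2) by rewrite lt_min !divr_gt0.
have [Z hZ hk] := hclos _ eta0.
have hZrv : is_rv dist Z by case: hZ.
have K1 : [set x : R | 0 < x /\ (P [set s | (x < dist (Z s) (Y s))%R] <= x%:E)%E] 1.
  split; first exact: ltr01.
  by apply: probability_le1; exact: meas_gt.
have [e' [e'0 hPe] e'lt] := inf_lt (ex_intro _ 1 K1) hk.
move: e'lt; rewrite lt_min => /andP [e'e e'c].
have [hd0 hZc] := hcl Z hZ.
have cd := hc Z hZ.
apply: (hZc (e / 2)); first by apply: divr_gt0.
case: hI => _ [_ hsub]; apply: (hsub _ _ _ HI).
move=> n /= hn; rewrite ltNge; apply/negP => hle.
have mA := @meas_lt _ _ _ _ _ hm hsep _ _ (r + e) (hX n) hY.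
have mB := (@meas_gt _ _ _ _ _ hm hsep _ _ e' hZrv hY).
have mAZ := (@meas_lt _ _ _ _ _ hm hsep _ _ (r + e / 2) (hX n) hZrv).
have sub : [set s | dist (X n s) (Z s) < r + e / 2] `<=`
    [set s | dist (X n s) (Y s) < r + e] `|` [set s | e' < dist (Z s) (Y s)].
  move=> s /= hs.
  have [h|h] := ltP e' (dist (Z s) (Y s)); [by right | left].
  case: hm => _ [_ [_ ht]]; have := ht (X n s) (Z s) (Y s); lra.
have h1 := @le_measure _ _ _ P _ _ (mem_set mAZ) (mem_set (measurableU _ _ mA mB)) sub.
have h2 := measureU2 P mA mB.
have h3 : (P [set s | (dist (X n s) (Z s) < r + e / 2)%R] <= (c / 2 + e')%:E)%E.
  rewrite EFinD; apply: (le_trans h1); apply: (le_trans h2); exact: leeD.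
have := lt_le_trans hn h3; rewrite lte_fin; lra.
Qed.
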